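(* If \(G\) admits a centroid map, then it has property RD.
   Context: \(G\) is a finitely generated group with a word-length \(\ell\), \(B_{G}(r)=\{g:\ell(g)\leq r\}\). \(G\) acts by isometries on a metric space \((X,d)\) with uniformly bounded stabilizers. A centroid map is a map \(m\colon G^{2}\to X\) such that for some polynomial \(P\): (1) \(\lvert m(B_{G}(r)\times\{h\})\rvert\leq P(r)\) for all \(h\in G\); (2) \(\lvert m(\{g\}\times G)\rvert\leq P(r)\) for all \(g\in B_{G}(r)\); (3) \(\lvert\{g^{-1}m(g,gh):g\in B_{G}(r)\}\rvert\leq P(r)\) for all \(h\in G\). Property RD means there is a polynomial \(Q\) with \(\lVert f\rVert_{op}\leq Q(\ell(f))\lVert f\rVert_{2}\) for all \(f\in\mathbb{C}[G]\), where \(\ell(f)=\max\{\ell(x):f(x)\neq0\}\), \(\lVert f\rVert_{2}\) is the \(\ell^{2}\)-norm and \(\lVert f\rVert_{op}\) the operator norm of convolution by \(f\) on \(\ell^{2}(G)\). *)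

(* Defs.v *)
From HB Require Import structures.
From mathcomp Require Import all_boot all_order all_algebra.
From mathcomp Require Import all_classical all_reals all_analysis.
From mathcomp Require Import complex.
From Stdlib Require Import ClassicalEpsilon.
Set Implicit Arguments. Unset Strict Implicit. Unset Printing Implicit Defensive.
Import Order.TTheory GRing.Theory Num.Theory.
Local Open Scope classical_set_scope.
Local Open Scope ring_scope.

Record is_group (G : Type) (mul : G -> G -> G) (inv : G -> G) (one : G) : Prop := {
  grp_assoc : forall x y z, mul x (mul y z) = mul (mul x y) z;
  grp_mul1 : forall x, mul one x = x;
  grp_mulV : forall x, mul (inv x) x = one }.

Section Word.
Variables (G : Type) (mul : G -> G -> G) (inv : G -> G) (one : G) (S : seq G).

Definition letter (s : G) : Prop := List.In s S \/ List.In (inv s) S.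
Definition word_prod (w : seq G) : G := foldr mul one w.

Definition wlen_le (g : G) (n : nat) : Prop :=
  exists w : seq G, (size w <= n)%N /\ (forall s, List.In s w -> letter s) /\ word_prod w = g.

Definition generates : Prop := forall g, exists n, wlen_le g n.

Definition wlen (g : G) : nat :=
  epsilon (inhabits 0%N) (fun n => wlen_le g n /\ forall m, wlen_le g m -> (n <= m)%N).

Definition ball_G (r : nat) : set G := [set g | (wlen g <= r)%N].
End Word.

Definition card_le (T : Type) (R : realType) (A : set T) (c : R) : Prop :=
  exists s : seq T, (forall x, A x -> List.In x s) /\ (size s)%:R <= c.

Record is_metric (R : realType) (X : Type) (d : X -> X -> R) : Prop := {
  met_eq0 : forall x y, d x y = 0 <-> x = y;
  met_sym : forall x y, d x y = d y x;
  met_tri : forall x y z, d x z <= d x y + d y z }.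

Record is_isom_action (R : realType) (G X : Type) (mul : G -> G -> G) (one : G)
    (d : X -> X -> R) (act : G -> X -> X) : Prop := {
  act1 : forall x, act one x = x;
  actM : forall g h x, act (mul g h) x = act g (act h x);
  act_isom : forall g x y, d (act g x) (act g y) = d x y }.

Definition unif_bdd_stab (R : realType) (G X : Type) (act : G -> X -> X) : Prop :=
  exists N : nat, forall x : X, card_le [set g : G | act g x = x] (N%:R : R).

Definition is_centroid_map (R : realType) (G X : Type) (mul : G -> G -> G)
    (inv : G -> G) (one : G) (S : seq G) (act : G -> X -> X)
    (m : G -> G -> X) (P : {poly R}) : Prop :=
  [/\ (forall (r : nat) (h : G),
         card_le [set m g h | g in ball_G mul inv one S r] P.[r%:R]),
      (forall (r : nat) (g : G), ball_G mul inv one S r g ->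
         card_le [set m g h | h in [set: G]] P.[r%:R]) &
      (forall (r : nat) (h : G),
         card_le [set act (inv g) (m g (mul g h)) | g in ball_G mul inv one S r]
           P.[r%:R])].

Definition admits_centroid_map (R : realType) (G X : Type) (mul : G -> G -> G)
    (inv : G -> G) (one : G) (S : seq G) (act : G -> X -> X) : Prop :=
  exists (m : G -> G -> X) (P : {poly R}), is_centroid_map mul inv one S act m P.

Notation Cx R := (complex.complex R).
Definition sqnorm (R : realType) (z : Cx R) : R :=
  complex.Re z ^+ 2 + complex.Im z ^+ 2.

Definition l2sq (R : realType) (G : choiceType) (xi : G -> Cx R) : \bar R :=
  \esum_(x in [set: G]) ((sqnorm (xi x))%:E)%E.

Definition l2norm (R : realType) (G : choiceType) (xi : G -> Cx R) : \bar R :=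
  match l2sq xi with
  | EFin r => EFin (Num.sqrt r)
  | _ => +oo%E
  end.

Definition in_l2 (R : realType) (G : choiceType) (xi : G -> Cx R) : Prop :=
  (l2sq xi < +oo)%E.

(* f is an element of C[G] whose support is contained in the list s *)
Definition supp_in (R : realType) (G : choiceType) (s : seq G) (f : G -> Cx R) : Prop :=
  forall x, f x != 0 -> x \in s.

Definition conv (R : realType) (G : choiceType) (mul : G -> G -> G) (inv : G -> G)
    (s : seq G) (f xi : G -> Cx R) : G -> Cx R :=
  fun x => \sum_(y <- undup s) f y * xi (mul (inv y) x).

(* l(f) = max { l(x) : f(x) <> 0 } (0 for f = 0) *)
Definition flen (R : realType) (G : Type) (mul : G -> G -> G) (inv : G -> G) (one : G)
    (S : seq G) (f : G -> Cx R) : nat :=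
  epsilon (inhabits 0%N) (fun r =>
    (forall x, f x <> 0 -> (wlen mul inv one S x <= r)%N) /\
    forall r', (forall x, f x <> 0 -> (wlen mul inv one S x <= r')%N) -> (r <= r')%N).

(* Property RD: ||f||_op <= Q(l(f)) ||f||_2 for all f in C[G] *)
Definition property_RD (R : realType) (G : choiceType) (mul : G -> G -> G)
    (inv : G -> G) (one : G) (S : seq G) : Prop :=
  exists Q : {poly R}, forall (s : seq G) (f : G -> Cx R), supp_in s f ->
    forall xi : G -> Cx R, in_l2 xi ->
      (l2norm (conv mul inv s f xi) <=
        (Q.[(flen mul inv one S f)%:R])%:E * l2norm f * l2norm xi)%E.

(* Main.v *)
Require Import Defs.
From HB Require Import structures.
From mathcomp Require Import all_boot all_order all_algebra.
From mathcomp Require Import ring lra.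
Set Implicit Arguments. Unset Strict Implicit. Unset Printing Implicit Defensive.
Import Order.TTheory GRing.Theory Num.Theory.
Local Open Scope ring_scope.


Section RealLemmas.
Variable R : rcfType.

Lemma sumsq_ge0 (I : Type) (r : seq I) (u : I -> R) : 0 <= \sum_(i <- r) u i ^+ 2.
Proof. by apply: sumr_ge0 => i _; rewrite sqr_ge0. Qed.

Lemma cs_sum (I : Type) (r : seq I) (u v : I -> R) :
  (forall i, 0 <= u i) -> (forall i, 0 <= v i) ->
  \sum_(i <- r) u i * v i <=
    Num.sqrt (\sum_(i <- r) u i ^+ 2) * Num.sqrt (\sum_(i <- r) v i ^+ 2).
Proof.
move=> u0 v0; elim: r => [|i r IH]; first by rewrite !big_nil sqrtr0 mul0r.
rewrite !big_cons.
set A := \sum_(j <- r) u j ^+ 2 in IH *.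
set B := \sum_(j <- r) v j ^+ 2 in IH *.
have A0 : 0 <= A by exact: sumsq_ge0.
have B0 : 0 <= B by exact: sumsq_ge0.
set S := \sum_(j <- r) u j * v j in IH *.
have a0 := sqrtr_ge0 A; have b0 := sqrtr_ge0 B.
have eA := sqr_sqrtr A0; have eB := sqr_sqrtr B0.
rewrite -eA -eB -sqrtrM ?addr_ge0 ?sqr_ge0 //.
apply: (le_trans (y := u i * v i + Num.sqrt A * Num.sqrt B)); first by rewrite lerD2l.
have h0 : 0 <= u i * v i + Num.sqrt A * Num.sqrt B by rewrite addr_ge0 ?mulr_ge0.
rewrite -[X in X <= _](ger0_norm h0) -sqrtr_sqr ler_sqrt; last by rewrite mulr_ge0 ?addr_ge0 ?sqr_ge0.
suff H : forall x y a b : R, (x*y+a*b)^+2 <= (x^+2+a^+2)*(y^+2+b^+2) by apply: H.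
move=> x y a b; rewrite -subr_ge0.
have -> : (x ^+ 2 + a ^+ 2) * (y ^+ 2 + b ^+ 2) - (x * y + a * b) ^+ 2 = (x*b - a*y)^+2 by ring.
exact: sqr_ge0.
Qed.

Lemma sum_const_cnt (J : Type) (s : seq J) (P : pred J) (c : R) :
  \sum_(j <- s | P j) c = c *+ count P s.
Proof.
elim: s => [|j s IH]; first by rewrite big_nil.
rewrite big_cons /= IH; case: (P j) => //=.
by rewrite mulrS.
Qed.

Lemma sum_ind_le (J : eqType) (Js : seq J) (P : pred J) (c : R) :
  uniq Js ->
  (forall L : seq J, uniq L -> (forall y, y \in L -> P y) -> (size L)%:R <= c) ->
  \sum_(j <- Js | P j) (1 : R) <= c.
Proof.
move=> uJ H; rewrite sum_const_cnt -size_filter.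
apply: H; first by rewrite filter_uniq.
by move=> y; rewrite mem_filter => /andP[].
Qed.

Lemma double_count (I : eqType) (J : Type) (Is : seq I) (Js : seq J) (P : I -> J -> bool)
    (w : I -> R) (c : R) :
  (forall i, 0 <= w i) ->
  (forall i, i \in Is -> \sum_(j <- Js | P i j) (1 : R) <= c) ->
  \sum_(j <- Js) \sum_(i <- Is | P i j) w i <= c * \sum_(i <- Is) w i.
Proof.
move=> w0 Hc.
rewrite (eq_bigr (fun j => \sum_(i <- Is) (if P i j then w i else 0))); last first.
  by move=> j _; rewrite big_mkcond.
rewrite exchange_big /= big_distrr /= big_seq [X in _ <= X]big_seq.
apply: ler_sum => i Hi.
rewrite -big_mkcond /=.
have -> : \sum_(j <- Js | P i j) w i = w i * \sum_(j <- Js | P i j) (1 : R).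
  by rewrite big_distrr /=; apply: eq_bigr => j _; rewrite mulr1.
by rewrite mulrC ler_wpM2r // Hc.
Qed.

Lemma sum_subset (I : eqType) (L1 L2 : seq I) (w : I -> R) :
  uniq L1 -> uniq L2 -> {subset L1 <= L2} -> (forall i, 0 <= w i) ->
  \sum_(i <- L1) w i <= \sum_(i <- L2) w i.
Proof.
move=> u1 u2 sub w0.
rewrite [X in _ <= X](bigID (fun i => i \in L1)) /=.
have -> : \sum_(i <- L2 | i \in L1) w i = \sum_(i <- L1) w i.
  rewrite -big_filter; apply: perm_big; apply: uniq_perm; rewrite ?filter_uniq //.
  by move=> x; rewrite mem_filter; apply/idP/idP => [/andP[]//|H]; rewrite H sub.
by rewrite lerDl sumr_ge0.
Qed.

Lemma partition_sum (I J : eqType) (A : seq I) (Ps : seq J) (f : I -> J) (g : I -> R) :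
  uniq Ps -> (forall x, x \in A -> f x \in Ps) ->
  \sum_(x <- A) g x = \sum_(p <- Ps) \sum_(x <- A | f x == p) g x.
Proof.
move=> uP HA.
rewrite (eq_bigr (fun p => \sum_(x <- A) (if f x == p then g x else 0))); last first.
  by move=> p _; rewrite big_mkcond.
rewrite exchange_big /= big_seq [X in _ = X]big_seq.
apply: eq_bigr => x Hx.
rewrite -big_mkcond sum_const_cnt.
have -> : count (fun p => f x == p) Ps = count_mem (f x) Ps.
  by apply: eq_count => p; rewrite eq_sym.
by rewrite count_uniq_mem // HA.
Qed.

Lemma partition_sum_cond (I J : eqType) (A : seq I) (P : pred I) (Ps : seq J)
    (f : I -> J) (g : I -> R) :
  uniq Ps -> (forall x, x \in A -> P x -> f x \in Ps) ->
  \sum_(x <- A | P x) g x = \sum_(p <- Ps) \sum_(x <- A | P x && (f x == p)) g x.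
Proof.
move=> uP HA; rewrite -big_filter (partition_sum _ (f := f) uP).
  by apply: eq_bigr => p _; rewrite big_filter_cond.
by move=> x; rewrite mem_filter => /andP[Px xA]; apply: HA.
Qed.

Lemma size_le1 (T : eqType) (L : seq T) (z : T) :
  uniq L -> (forall y, y \in L -> y = z) -> ((size L)%:R : R) <= 1.
Proof.
move=> uL Hz; rewrite (_ : 1 = (size [:: z])%:R) // ler_nat.
by apply: uniq_leq_size => // y /Hz ->; rewrite inE.
Qed.

End RealLemmas.

Section Core.
Variables (R : rcfType) (G X : eqType) (mul : G -> G -> G) (inv : G -> G)
  (act : G -> X -> X) (m : G -> G -> X).
Hypothesis HmulK : forall a x, mul a (mul (inv a) x) = x.
Hypothesis HactK : forall a p, act a (act (inv a) p) = p.
Variables (us A Bs : seq G) (F Xi H : G -> R) (Pr Nr : R).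
Hypotheses (uus : uniq us) (uA : uniq A) (uB : uniq Bs).
Hypothesis HB : forall a x, a \in us -> x \in A -> mul (inv a) x \in Bs.
Hypotheses (F0 : forall a, 0 <= F a) (Xi0 : forall a, 0 <= Xi a) (H0 : forall a, 0 <= H a).
Hypothesis Pr0 : 0 <= Pr.
Hypothesis Nr0 : 0 <= Nr.
Hypothesis c1 : forall x (L : seq X), uniq L ->
  (forall p, p \in L -> exists a, a \in us /\ m a x = p) -> (size L)%:R <= Pr.
Hypothesis c2 : forall a, a \in us -> forall (L : seq X), uniq L ->
  (forall p, p \in L -> exists x, m a x = p) -> (size L)%:R <= Pr.
Hypothesis c3 : forall b (L : seq X), uniq L ->
  (forall q, q \in L -> exists a, a \in us /\ act (inv a) (m a (mul a b)) = q) ->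
  (size L)%:R <= Pr.
Hypothesis c4 : forall p q (L : seq G), uniq L ->
  (forall a, a \in L -> act a q = p) -> (size L)%:R <= Nr.

Let qf a x := act (inv a) (m a x).
Let Ps := undup [seq m a x | a <- us, x <- A].
Let Qs := undup [seq qf a x | a <- us, x <- A].
Let cnd a p q x := (m a x == p) && (qf a x == q).
Let qok b q := has (fun a => has (fun x => (mul (inv a) x == b) && (qf a x == q)) A) us.
Let pok x p := has (fun a => m a x == p) us.
Let Xq q := \sum_(b <- Bs | qok b q) Xi b ^+ 2.
Let Hp p := \sum_(x <- A | pok x p) H x ^+ 2.
Let K p q := \sum_(a <- us) (if has (cnd a p q) A then F a else 0).

Lemma core :
  \sum_(x <- A) \sum_(a <- us) F a * Xi (mul (inv a) x) * H x <=
  Num.sqrt (Nr * Pr * \sum_(a <- us) F a ^+ 2) *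
  Num.sqrt (Pr * (\sum_(b <- Bs) Xi b ^+ 2) * (Pr * \sum_(x <- A) H x ^+ 2)).
Proof.
have uPs : uniq Ps by rewrite undup_uniq.
have uQs : uniq Qs by rewrite undup_uniq.
have inPs : forall a x, a \in us -> x \in A -> m a x \in Ps.
  by move=> a x ha hx; rewrite mem_undup; apply: (allpairs_f m ha hx).
have inQs : forall a x, a \in us -> x \in A -> qf a x \in Qs.
  by move=> a x ha hx; rewrite mem_undup; apply: (allpairs_f qf ha hx).
have E1 : \sum_(x <- A) \sum_(a <- us) F a * Xi (mul (inv a) x) * H x =
  \sum_(a <- us) \sum_(p <- Ps) \sum_(q <- Qs)
     \sum_(x <- A | cnd a p q x) F a * (Xi (mul (inv a) x) * H x).
  rewrite exchange_big /= big_seq [RHS]big_seq; apply: eq_bigr => a ha.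
  rewrite (partition_sum (f := m a) _ uPs); last by move=> x hx; apply: inPs.
  apply: eq_bigr => p _.
  rewrite (partition_sum_cond (f := qf a) (Ps := Qs)) //; last by move=> x hx _; apply: inQs.
  by apply: eq_bigr => q _; apply: eq_bigr => x _; rewrite mulrA.
have E2 : forall a p q, a \in us ->
  \sum_(x <- A | cnd a p q x) F a * (Xi (mul (inv a) x) * H x) <=
  (if has (cnd a p q) A then F a else 0) * (Num.sqrt (Xq q) * Num.sqrt (Hp p)).
  move=> a p q ha; case: ifP => hh; last by rewrite big_hasC ?hh // mul0r.
  rewrite -big_distrr /= ler_wpM2l //.
  rewrite -big_filter; apply: le_trans (@cs_sum _ _ _ (fun x => Xi (mul (inv a) x)) H _ _) _ => //.
  apply: ler_pM; rewrite ?sqrtr_ge0 //.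
  - rewrite ler_sqrt; last by apply: sumr_ge0 => i _; rewrite sqr_ge0.
    have -> : \sum_(x <- filter (cnd a p q) A) Xi (mul (inv a) x) ^+ 2 =
       \sum_(b <- map (mul (inv a)) (filter (cnd a p q) A)) Xi b ^+ 2 by rewrite big_map.
    have -> : Xq q = \sum_(b <- filter (qok^~ q) Bs) Xi b ^+ 2 by rewrite big_filter.
    apply: sum_subset; last by move=> i; rewrite sqr_ge0.
    + rewrite map_inj_uniq ?filter_uniq // => x y e.
      by rewrite -(HmulK a x) e HmulK.
    + by rewrite filter_uniq.
    + move=> b /mapP [x]; rewrite mem_filter => /andP [hc hx] ->.
      rewrite mem_filter HB // andbT; apply/hasP; exists a => //; apply/hasP; exists x => //.
      by rewrite eqxx /=; move: hc => /andP[_ ->].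
  - rewrite ler_sqrt; last by apply: sumr_ge0 => i _; rewrite sqr_ge0.
    rewrite big_filter /Hp big_mkcond [X in _ <= X]big_mkcond /=.

    apply: ler_sum => x _; case: ifP => hc.
      have -> : pok x p by apply/hasP; exists a => //; move: hc => /andP[-> _].
      by [].
    by case: (pok x p); rewrite ?sqr_ge0.
have Xq0 : forall q, 0 <= Xq q by move=> q; apply: sumr_ge0 => i _; rewrite sqr_ge0.
have Hp0 : forall p, 0 <= Hp p by move=> p; apply: sumr_ge0 => i _; rewrite sqr_ge0.
have K0 : forall p q, 0 <= K p q.
  by move=> p q; apply: sumr_ge0 => a _; case: ifP.
have E3 : \sum_(x <- A) \sum_(a <- us) F a * Xi (mul (inv a) x) * H x <=
    \sum_(p <- Ps) \sum_(q <- Qs) K p q * (Num.sqrt (Xq q) * Num.sqrt (Hp p)).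
  rewrite E1; apply: (@le_trans _ _ (\sum_(a <- us) \sum_(p <- Ps) \sum_(q <- Qs)
    (if has (cnd a p q) A then F a else 0) * (Num.sqrt (Xq q) * Num.sqrt (Hp p)))).
    rewrite big_seq [X in _ <= X]big_seq; apply: ler_sum => a ha.
    by apply: ler_sum => p _; apply: ler_sum => q _; apply: E2.
  have -> : \sum_(a <- us) \sum_(p <- Ps) \sum_(q <- Qs)
    (if has (cnd a p q) A then F a else 0) * (Num.sqrt (Xq q) * Num.sqrt (Hp p)) =
    \sum_(p <- Ps) \sum_(q <- Qs) K p q * (Num.sqrt (Xq q) * Num.sqrt (Hp p)).
    rewrite exchange_big; apply: eq_bigr => p _; rewrite exchange_big.
    by apply: eq_bigr => q _; rewrite /K big_distrl.
  by [].
have E4 : \sum_(p <- Ps) \sum_(q <- Qs) K p q * (Num.sqrt (Xq q) * Num.sqrt (Hp p)) <=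
    Num.sqrt (\sum_(p <- Ps) \sum_(q <- Qs) K p q ^+ 2) *
    Num.sqrt (\sum_(p <- Ps) \sum_(q <- Qs) (Num.sqrt (Xq q) * Num.sqrt (Hp p)) ^+ 2).
  apply: (@le_trans _ _ (\sum_(p <- Ps) Num.sqrt (\sum_(q <- Qs) K p q ^+ 2) *
       Num.sqrt (\sum_(q <- Qs) (Num.sqrt (Xq q) * Num.sqrt (Hp p)) ^+ 2))).
    apply: ler_sum => p _.
    apply: (@cs_sum _ _ _ (K p) (fun q => Num.sqrt (Xq q) * Num.sqrt (Hp p))) => q //.
    by rewrite mulr_ge0 ?sqrtr_ge0.
  apply: le_trans (@cs_sum _ _ _ (fun p => Num.sqrt (\sum_(q <- Qs) K p q ^+ 2))
     (fun p => Num.sqrt (\sum_(q <- Qs) (Num.sqrt (Xq q) * Num.sqrt (Hp p)) ^+ 2)) _ _) _;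
   try by move=> p; rewrite sqrtr_ge0.
  rewrite (eq_bigr (fun p => \sum_(q <- Qs) K p q ^+ 2)); last first.
    by move=> p _; rewrite sqr_sqrtr // sumsq_ge0.
  rewrite [X in _ * Num.sqrt X <= _](eq_bigr (fun p =>
     \sum_(q <- Qs) (Num.sqrt (Xq q) * Num.sqrt (Hp p)) ^+ 2)) //.
  by move=> p _; rewrite sqr_sqrtr // sumsq_ge0.
have E5 : \sum_(p <- Ps) \sum_(q <- Qs) (Num.sqrt (Xq q) * Num.sqrt (Hp p)) ^+ 2 =
    (\sum_(q <- Qs) Xq q) * (\sum_(p <- Ps) Hp p).
  rewrite big_distrr /=; apply: eq_bigr => p _; rewrite big_distrl /=.
  by apply: eq_bigr => q _; rewrite exprMn !sqr_sqrtr.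
have hX : \sum_(q <- Qs) Xq q <= Pr * \sum_(b <- Bs) Xi b ^+ 2.
  apply: (@double_count _ _ _ Bs Qs qok (fun b => Xi b ^+ 2)) => [b|b hb].
    by rewrite sqr_ge0.
  apply: sum_ind_le => // L uL HL. apply: (@c3 b L uL) => q /HL.
  move=> /hasP [a ha /hasP [x hx /andP [/eqP eb /eqP eq]]].
  by exists a; split => //; rewrite -eb HmulK.
have hH : \sum_(p <- Ps) Hp p <= Pr * \sum_(x <- A) H x ^+ 2.
  apply: (@double_count _ _ _ A Ps pok (fun x => H x ^+ 2)) => [x|x hx].
    by rewrite sqr_ge0.
  apply: sum_ind_le => // L uL HL; apply: (@c1 x L uL) => p /HL.
  by move=> /hasP [a ha /eqP e]; exists a.
have hK1 : forall p q, K p q ^+ 2 <= Nr * \sum_(a <- us | has (cnd a p q) A) F a ^+ 2.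
  move=> p q.
  have eK : K p q = \sum_(a <- filter (fun a => has (cnd a p q) A) us) F a * 1.
    by rewrite /K -big_mkcond big_filter; apply: eq_bigr => a _; rewrite mulr1.
  have hcs := @cs_sum _ _ (filter (fun a => has (cnd a p q) A) us) F (fun _ => 1) F0 (fun _ => ler01).
  rewrite -eK in hcs.
  have h1 : \sum_(a <- filter (fun a => has (cnd a p q) A) us) (1 : R) ^+ 2 <= Nr.
    rewrite big_filter (eq_bigr (fun _ => 1)); last by move=> a _; rewrite expr1n.
    apply: sum_ind_le => // L uL HL; apply: (@c4 p q L uL) => a /HL.
    move=> /hasP [x hx /andP [/eqP ep /eqP eq]].
    by rewrite -eq /qf HactK.
  apply: (@le_trans _ _ ((Num.sqrt (\sum_(a <- filter (fun a => has (cnd a p q) A) us) F a ^+ 2) *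
     Num.sqrt (\sum_(a <- filter (fun a => has (cnd a p q) A) us) (1 : R) ^+ 2)) ^+ 2)).
    by rewrite !expr2; apply: ler_pM => //; rewrite ?K0.
  rewrite exprMn !sqr_sqrtr ?sumsq_ge0 // big_filter mulrC ler_wpM2r //.
  by apply: sumr_ge0 => a _; rewrite sqr_ge0.
have hK : \sum_(p <- Ps) \sum_(q <- Qs) K p q ^+ 2 <= Nr * (Pr * \sum_(a <- us) F a ^+ 2).
  apply: (@le_trans _ _ (\sum_(p <- Ps) \sum_(q <- Qs)
      Nr * \sum_(a <- us | has (cnd a p q) A) F a ^+ 2)).
    by apply: ler_sum => p _; apply: ler_sum => q _; apply: hK1.
  rewrite (eq_bigr (fun p => Nr * \sum_(q <- Qs) \sum_(a <- us | has (cnd a p q) A) F a ^+ 2));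
    last by move=> p _; rewrite big_distrr.
  rewrite -big_distrr /= ler_wpM2l //.
  apply: (@le_trans _ _ (\sum_(p <- Ps) \sum_(a <- us | has (fun x => m a x == p) A) F a ^+ 2)).
    apply: ler_sum => p _.
    have -> : \sum_(q <- Qs) \sum_(a <- us | has (cnd a p q) A) F a ^+ 2 =
       \sum_(q <- Qs) \sum_(a <- filter (fun a => has (fun x => m a x == p) A) us |
          has (cnd a p q) A) F a ^+ 2.
      apply: eq_bigr => q _; rewrite big_filter_cond; apply: eq_bigl => a.
      case hc: (has (cnd a p q) A); rewrite ?andbF ?andbT //.
      by move: hc => /hasP [x hx /andP [ep _]]; symmetry; apply/hasP; exists x.
    rewrite -[X in _ <= X]big_filter -[X in _ <= X]mul1r.
    apply: (@double_count _ _ _ _ _ (fun a q => has (cnd a p q) A) (fun a => F a ^+ 2))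
      => [a|a]; first by rewrite sqr_ge0.
    rewrite mem_filter => /andP [_ ha].
    apply: sum_ind_le => // L uL HL. apply: (@size_le1 _ _ L (act (inv a) p) uL).
    move=> q /HL /hasP [x hx /andP [/eqP ep /eqP eq]].
    by rewrite -eq /qf ep.
  apply: (@double_count _ _ _ _ _ (fun a p => has (fun x => m a x == p) A) (fun a => F a ^+ 2))
    => [a|a ha]; first by rewrite sqr_ge0.
  apply: sum_ind_le => // L uL HL; apply: (@c2 a ha L uL) => p /HL.
  by move=> /hasP [x hx /eqP e]; exists x.
apply: (le_trans E3); apply: (le_trans E4); rewrite E5.
apply: ler_pM; rewrite ?sqrtr_ge0 // ler_sqrt.
- by rewrite -mulrA.
- by rewrite !mulr_ge0 ?sumsq_ge0.
- by apply: ler_pM => //; apply: sumr_ge0 => i _.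
- by rewrite !mulr_ge0 ?sumsq_ge0.
Qed.
End Core.

From mathcomp Require Import all_classical all_reals all_analysis.
From mathcomp Require Import complex.
From Stdlib Require Import ClassicalEpsilon.
Import Order.TTheory GRing.Theory Num.Theory.
Local Open Scope classical_set_scope.
Local Open Scope ring_scope.

Section Bridge.
Variable R : realType.

Lemma sqnormE (z : Cx R) : sqnorm z = Normc.normc z ^+ 2.
Proof. by case: z => a b; rewrite /sqnorm /= sqr_sqrtr // addr_ge0 ?sqr_ge0. Qed.

Lemma normc_ge0 (z : Cx R) : 0 <= Normc.normc z.
Proof. by case: z => a b; rewrite /= sqrtr_ge0. Qed.

Lemma normc_sum (I : Type) (r : seq I) (g : I -> Cx R) :
  Normc.normc (\sum_(i <- r) g i) <= \sum_(i <- r) Normc.normc (g i).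
Proof.
elim: r => [|i r IH]; first by rewrite !big_nil Normc.normc0.
rewrite !big_cons; apply: le_trans (le_normcD _ _) _.
by rewrite lerD2l.
Qed.

Variable G : choiceType.

Lemma l2sq_ge0 (g : G -> Cx R) : (0 <= l2sq g)%E.
Proof. by apply: esum_ge0 => x _; rewrite lee_fin sqnormE sqr_ge0. Qed.

Lemma l2sq_lb (g : G -> Cx R) (L : seq G) : uniq L ->
  ((\sum_(x <- L) sqnorm (g x))%:E <= l2sq g)%E.
Proof.
move=> uL; apply: esum_ge; exists [set` L]; first by split => //; exact: finite_seq.
by rewrite -sumEFin fsbig_seq.
Qed.

Lemma l2sq_ub (g : G -> Cx R) (c : R) :
  (forall L : seq G, uniq L -> \sum_(x <- L) sqnorm (g x) <= c) ->
  (l2sq g <= c%:E)%E.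
Proof.
move=> H; rewrite /l2sq /esum; apply: ge_ereal_sup => _ [Y [finY _] <-].
rewrite fsbig_finite // sumEFin lee_fin; apply: H.
exact: finmap.fset_uniq.
Qed.

Lemma l2sq_fin (g : G -> Cx R) (c : R) : (l2sq g <= c%:E)%E ->
  exists L : R, l2sq g = L%:E /\ 0 <= L /\ L <= c.
Proof.
have := l2sq_ge0 g; case: (l2sq g) => [L| |] //= L0 Lc.
by exists L; split => //; split; rewrite -lee_fin.
Qed.

End Bridge.

Section Grp.
Variables (G : Type) (mul : G -> G -> G) (inv : G -> G) (one : G).
Hypothesis Hg : is_group mul inv one.

Lemma grp_mulV' x : mul x (inv x) = one.
Proof.
have h1 : mul x (inv x) = mul (mul (inv (inv x)) (inv x)) (mul x (inv x)).
  by rewrite (grp_mulV Hg) (grp_mul1 Hg).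
rewrite h1 -(grp_assoc Hg) (grp_assoc Hg (inv x) x (inv x)) (grp_mulV Hg) (grp_mul1 Hg).
by rewrite (grp_mulV Hg).
Qed.

Lemma grp_mulK a x : mul a (mul (inv a) x) = x.
Proof. by rewrite (grp_assoc Hg) grp_mulV' (grp_mul1 Hg). Qed.
End Grp.

Lemma In_mem (T : eqType) (x : T) (s : seq T) : List.In x s -> x \in s.
Proof.
elim: s => [|y s IH] //= [->|/IH]; first by rewrite inE eqxx.
by rewrite inE => ->; rewrite orbT.
Qed.

Lemma card_le_size (T : eqType) (R : realType) (Y : set T) (c : R) :
  Defs.card_le Y c -> forall L : seq T, uniq L -> (forall y, y \in L -> Y y) ->
  ((size L)%:R : R) <= c.
Proof.
move=> [s [Hs Hc]] L uL HL; apply: le_trans Hc; rewrite ler_nat.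
by apply: uniq_leq_size => // y /HL /Hs /In_mem.
Qed.

Lemma card_le_ge0 (T : Type) (R : realType) (Y : set T) (c : R) :
  Defs.card_le Y c -> 0 <= c.
Proof. by move=> [s [_ Hc]]; apply: le_trans Hc. Qed.

Lemma flen_spec (R : realType) (G : choiceType) (mul : G -> G -> G) (inv : G -> G)
  (one : G) (S : seq G) (f : G -> Cx R) (s : seq G) :
  supp_in s f -> forall x, f x <> 0 ->
  (wlen mul inv one S x <= flen mul inv one S f)%N.
Proof.
move=> sf.
pose Pr r := forall x, f x <> 0 -> (wlen mul inv one S x <= r)%N.
have exb : exists r, `[< Pr r >].
  exists (\max_(y <- s) wlen mul inv one S y); apply/asboolP => x fx.
  by apply: leq_bigmax_seq => //; apply: sf; apply/eqP.
have ex : exists r, Pr r /\ forall r', Pr r' -> (r <= r')%N.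
  case: (ex_minnP exb) => r /asboolP Hr Hmin; exists r; split => // r' Hr'.
  by apply: Hmin; apply/asboolP.
by have [H _] := epsilon_spec (inhabits 0%N) _ ex.
Qed.

Lemma l2sq_fin2 (R : realType) (G : choiceType) (g : G -> Cx R) :
  in_l2 g -> exists L : R, l2sq g = L%:E /\ 0 <= L.
Proof.
rewrite /in_l2; have := l2sq_ge0 g; case: (l2sq g) => [L| |] //= L0 _.
by exists L; split => //; rewrite -lee_fin.
Qed.

Lemma l2sq_supp (R : realType) (G : choiceType) (g : G -> Cx R) (s : seq G) :
  supp_in s g -> (l2sq g <= (\sum_(x <- undup s) sqnorm (g x))%:E)%E.
Proof.
move=> sg; apply: l2sq_ub => L uL.
rewrite (bigID (fun x => x \in undup s)) /=.
rewrite [X in _ + X]big1; last first.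
  move=> x; rewrite mem_undup => xs.
  have -> : g x = 0 by apply/eqP; apply: contraNT xs => /sg.
  by rewrite /sqnorm /= expr0n /= addr0.
rewrite addr0 -big_filter; apply: sum_subset.
- by rewrite filter_uniq.
- by rewrite undup_uniq.
- by move=> x; rewrite mem_filter => /andP[].
- by move=> x; rewrite sqnormE sqr_ge0.
Qed.

Lemma sq_bound (R : realType) (T K : R) : 0 <= T -> 0 <= K ->
  T <= K * Num.sqrt T -> T <= K ^+ 2.
Proof.
move=> T0 K0 h.
have e := sqr_sqrtr T0.
have u0 := sqrtr_ge0 T.
move: (Num.sqrt T) e u0 h => u e u0 h.
rewrite -e in h *.
case: (leP u K) => hu; first by rewrite !expr2 ler_pM.
have : K * u < u ^+ 2 by rewrite expr2 ltr_pM2r // (le_lt_trans K0 hu).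
by rewrite ltNge h.
Qed.

Theorem theorem3 (R : realType) (G : choiceType) (mul : G -> G -> G) (inv : G -> G)
    (one : G) (Hgrp : is_group mul inv one) (S : seq G)
    (HS : generates mul inv one S)
    (X : Type) (d : X -> X -> R) (Hd : is_metric d)
    (act : G -> X -> X) (Hact : is_isom_action mul one d act)
    (Hstab : unif_bdd_stab R act) :
  admits_centroid_map R mul inv one S act ->
  property_RD R mul inv one S.
Proof.
move=> [m [P [cm1 cm2 cm3]]].
case: Hstab => N HN.
exists (N%:R%:P * P + P * P).
move=> s f supf xi xil2.
set r := flen mul inv one S f.
have hr : forall x, f x <> 0 -> (wlen mul inv one S x <= r)%N.
  by move=> x; apply: flen_spec supf x.
pose us := seq.filter (fun a => f a != 0) (undup s).
have uus : uniq us by rewrite filter_uniq ?undup_uniq.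
have ball_us : forall a, a \in us -> ball_G mul inv one S r a.
  by move=> a; rewrite mem_filter => /andP [/eqP fa _]; apply: hr.
pose Pr := P.[r%:R].
have Pr0 : 0 <= Pr := card_le_ge0 (cm1 r one).
have N0 : 0 <= (N%:R : R) := ler0n _ _.
pose F a := Normc.normc (f a).
pose Xi b := Normc.normc (xi b).
pose cv := Defs.conv mul inv s f xi.
pose H x := Normc.normc (cv x).
have [Lx [eX Lx0]] := l2sq_fin2 xil2.
have [Lf [eF [Lf0 _]]] := l2sq_fin (l2sq_supp supf).
pose Cc := Num.sqrt (N%:R * Pr) * Pr.
have Cc0 : 0 <= Cc by rewrite mulr_ge0 ?sqrtr_ge0.
pose K' := Cc * Num.sqrt Lf * Num.sqrt Lx.
have K'0 : 0 <= K' by rewrite !mulr_ge0 ?sqrtr_ge0.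
have HmulK := grp_mulK Hgrp.
have HactK : forall a p, act a (act (inv a) p) = p.
  by move=> a p; rewrite -(actM Hact) (grp_mulV' Hgrp) (act1 Hact).
have key : forall A : seq G, uniq A -> \sum_(x <- A) sqnorm (cv x) <= K' ^+ 2.
  move=> A uA.
  pose Bs := undup [seq mul (inv a) x | a <- us, x <- A].
  have uB : uniq Bs by rewrite undup_uniq.
  have HB : forall a x, a \in us -> x \in A -> mul (inv a) x \in Bs.
    by move=> a x ha hx; rewrite mem_undup; apply: (allpairs_f (fun a x => mul (inv a) x) ha hx).
  have F0 : forall a, 0 <= F a by move=> a; apply: normc_ge0.
  have Xi0 : forall a, 0 <= Xi a by move=> a; apply: normc_ge0.
  have H0 : forall a, 0 <= H a by move=> a; apply: normc_ge0.
  have c1 : forall x (L : seq {classic X}), uniq L ->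
    (forall p, p \in L -> exists a, a \in us /\ m a x = p) -> (size L)%:R <= Pr.
    move=> x L uL HL.
    apply: (@card_le_size {classic X} _ _ _ (cm1 r x) L uL) => p /HL [a [ha <-]].
    by exists a => //; apply: ball_us.
  have c2 : forall a, a \in us -> forall (L : seq {classic X}), uniq L ->
    (forall p, p \in L -> exists x, m a x = p) -> (size L)%:R <= Pr.
    move=> a ha L uL HL.
    apply: (@card_le_size {classic X} _ _ _ (cm2 r a (ball_us a ha)) L uL) => p /HL [x <-].
    by exists x.
  have c3 : forall b (L : seq {classic X}), uniq L ->
    (forall q, q \in L -> exists a, a \in us /\ act (inv a) (m a (mul a b)) = q) ->
    (size L)%:R <= Pr.
    move=> b L uL HL.
    apply: (@card_le_size {classic X} _ _ _ (cm3 r b) L uL) => q /HL [a [ha <-]].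
    by exists a => //; apply: ball_us.
  have c4 : forall (p q : {classic X}) (L : seq G), uniq L ->
    (forall a, a \in L -> act a q = p) -> (size L)%:R <= (N%:R : R).
    move=> p q [|a0 L] uL HL; first by rewrite ler_nat.
    have ha0 : act a0 q = p by apply: HL; rewrite inE eqxx.
    rewrite -(size_map (mul (inv a0))); apply: (card_le_size (HN q)).
      rewrite map_inj_uniq // => x y e.
      by rewrite -(HmulK a0 x) e HmulK.
    move=> y /mapP [a ha ->] /=.
    by rewrite (actM Hact) (HL a ha) -ha0 -(actM Hact) (grp_mulV Hgrp) (act1 Hact).
  have hcore := core (X := {classic X}) (act := act) (m := m) (F := F) (Xi := Xi) (H := H)
    HmulK HactK uus uA uB HB F0 Xi0 H0 Pr0 N0 c1 c2 c3 c4.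
  have hH : forall x, H x <= \sum_(a <- us) F a * Xi (mul (inv a) x).
    move=> x; rewrite /H /cv /Defs.conv; apply: le_trans (normc_sum _ _) _.
    rewrite /us big_filter [X in _ <= X]big_mkcond /=; apply: ler_sum => y _.
    rewrite Normc.normcM; have [->|_] := eqVneq (f y) 0; last by [].
    have -> : Normc.normc (0 : Cx R) = 0 by rewrite /Normc.normc /= expr0n /= addr0 sqrtr0.
    by rewrite mul0r.
  set T := \sum_(x <- A) H x ^+ 2.
  have eT : \sum_(x <- A) sqnorm (cv x) = T by apply: eq_bigr => x _; rewrite sqnormE.
  rewrite eT.
  have T0 : 0 <= T by apply: sumr_ge0 => x _; rewrite sqr_ge0.
  have hTS : T <= \sum_(x <- A) \sum_(a <- us) F a * Xi (mul (inv a) x) * H x.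
    apply: ler_sum => x _; rewrite expr2 -big_distrl /=.
    by rewrite ler_wpM2r.
  set SF := \sum_(a <- us) F a ^+ 2 in hcore.
  set SX := \sum_(b <- Bs) Xi b ^+ 2 in hcore.
  have SF0 : 0 <= SF by apply: sumr_ge0 => x _; rewrite sqr_ge0.
  have SX0 : 0 <= SX by apply: sumr_ge0 => x _; rewrite sqr_ge0.
  have SFL : SF <= Lf.
    have -> : SF = \sum_(a <- us) sqnorm (f a).
      by rewrite /SF; apply: eq_bigr => a _; rewrite sqnormE.
    by rewrite -lee_fin -eF l2sq_lb.
  have SXL : SX <= Lx.
    have -> : SX = \sum_(a <- Bs) sqnorm (xi a).
      by rewrite /SX; apply: eq_bigr => a _; rewrite sqnormE.
    by rewrite -lee_fin -eX l2sq_lb.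
  apply: sq_bound => //; apply: (le_trans hTS); apply: (le_trans hcore).
  have NP0 : 0 <= (N%:R : R) * Pr by rewrite mulr_ge0.
  rewrite (@sqrtrM _ (N%:R * Pr) SF NP0) (@sqrtrM _ (Pr * SX) (Pr * T)) ?mulr_ge0 //.
  rewrite (@sqrtrM _ Pr SX Pr0) (@sqrtrM _ Pr T Pr0).
  have -> : Num.sqrt (N%:R * Pr) * Num.sqrt SF *
      (Num.sqrt Pr * Num.sqrt SX * (Num.sqrt Pr * Num.sqrt T)) =
      Num.sqrt (N%:R * Pr) * Num.sqrt Pr ^+ 2 * Num.sqrt SF * Num.sqrt SX * Num.sqrt T.
    by ring.
  rewrite sqr_sqrtr // /K' /Cc ler_wpM2r ?sqrtr_ge0 //.
  apply: ler_pM; rewrite ?mulr_ge0 ?sqrtr_ge0 // ?ler_sqrt //.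
  by apply: ler_wpM2l; rewrite ?mulr_ge0 ?sqrtr_ge0 // ler_sqrt.
have [Lc [eC [Lc0 LcK]]] := l2sq_fin (l2sq_ub key).
rewrite /l2norm eC eF eX -!EFinM lee_fin.
apply: (@le_trans _ _ K').
  rewrite -(ger0_norm K'0) -sqrtr_sqr ler_sqrt //; exact: sqr_ge0.
rewrite /K' ler_wpM2r ?sqrtr_ge0 // ler_wpM2r ?sqrtr_ge0 //.
rewrite !hornerE /Cc -/Pr.
apply: (@le_trans _ _ ((N%:R + Pr) * Pr)); last by rewrite mulrDl.
rewrite ler_wpM2r //.
rewrite -(@ger0_norm _ (N%:R + Pr)) ?addr_ge0 // -sqrtr_sqr ler_sqrt ?sqr_ge0 //.
by nra.
Qed.
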